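(* For every $n\ge 1$, the map $\Phi:\mathfrak{W}_n\to\mathcal{S}_n$ defined below is well defined (its output is a snake of length $n$) and is a bijection.
   Context: Let $[n]=\{1,\dots,n\}$ and let $\mathfrak{S}_n$ be the set of permutations of $[n]$, written in one-line notation $\sigma=\sigma_1\cdots\sigma_n$. A signed permutation of length $n$ is a word $p_1\cdots p_n$ with $p_i\in\{\pm1,\dots,\pm n\}$ such that $|p_1|\cdots|p_n|\in\mathfrak{S}_n$. A snake of length $n$ is a signed permutation with $p_1>0$ and $p_1>p_2<p_3>p_4<\cdots$ (strict inequalities alternating, starting with a descent). Let $\mathcal{S}_n$ denote the set of snakes of length $n$. A weakly increasing 3-dimensional permutation (3-WIP) of length $n$ is a pair $(\sigma,\pi)\in\mathfrak{S}_n^2$ with $\max(\sigma_1,\pi_1)\le\max(\sigma_2,\pi_2)\le\cdots\le\max(\sigma_n,\pi_n)$. Let $\mathfrak{W}_n$ be the set of these. For $\tau\in\mathfrak{S}_n$, a letter $k\in\{2,\dots,n\}$ is a cycle peak of $\tau$ if $\tau^{-1}(k)<k>\tau(k)$. The standard cycle form of $\tau$ writes each cycle with its largest element first and lists the cycles from left to right in increasing order of their largest elements. Foata's map $f:\mathfrak{S}_n\to\mathfrak{S}_n$ sends $\tau$ to the word obtained by erasing the parentheses of the standard cycle form of $\tau$. For a word $t=t_1\cdots t_n\in\mathfrak{S}_n$, set $t_0=0$, $t_{n+1}=+\infty$. Then $t_i$ is a left peak if $t_{i-1}<t_i>t_{i+1}$, and a right valley if $t_{i-1}>t_i<t_{i+1}$.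 Definition of $\Phi(\sigma,\pi)$ for $(\sigma,\pi)\in\mathfrak{W}_n$: (1) Let $\tau\in\mathfrak{S}_n$ be the permutation with $\tau(\sigma_i)=\pi_i$ for all $i$. Call a letter $k$ hatted if $k$ is a cycle peak of $\tau$ and there exists $\ell\in[n-1]$ with $\sigma_\ell=\pi_{\ell+1}=k$. (2) Let $\tilde\tau=f(\tau)$. The hatted letters keep their hats; they are left peaks of $\tilde\tau$. (3) Associate each right valley $\tilde\tau_i$ of $\tilde\tau$ with the left peak $\tilde\tau_j$ having the largest index $j<i$. Define $\Phi(\sigma,\pi)=p_1\cdots p_n$ by $p_i=-\tilde\tau_i$ if either (a) $i$ is even and $\tilde\tau_i$ is not a right valley, or (b) $\tilde\tau_i$ is a right valley whose associated left peak is hatted; and $p_i=\tilde\tau_i$ otherwise. Example: $(\sigma,\pi)=(152673894,\,256317849)$ gives $\tau=(5)(\hat7,1,2,6,3)(8)(\hat9,4)$, then $\tilde\tau=5\,\hat7\,1\,2\,6\,3\,8\,\hat9\,4$, and finally $\Phi(\sigma,\pi)=5\,\bar7\,\bar1\,\bar2\,6\,3\,8\,\bar9\,\bar4$, where $\bar k$ means $-k$. *)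

(* Defs.v *)
(* Permutations of [n] = {1..n} are represented as words
   (seq nat) that are rearrangements of [:: 1; ...; n]; signed permutations
   as words in seq int. Positions in words are 1-based in the comments
   (t_i = nth 0 t i.-1). *)
From mathcomp Require Import all_boot all_order all_algebra.
Set Implicit Arguments. Unset Strict Implicit. Unset Printing Implicit Defensive.
Import GRing.Theory Num.Theory.

Definition is_perm (n : nat) (s : seq nat) : bool := perm_eq s (iota 1 n).

Definition is_WIP (n : nat) (w : seq nat * seq nat) : bool :=
  [&& is_perm n w.1, is_perm n w.2 &
      sorted leq [seq maxn x.1 x.2 | x <- zip w.1 w.2]].

Definition is_signed_perm (n : nat) (p : seq int) : bool :=
  (size p == n) && perm_eq [seq absz x | x <- p] (iota 1 n).

Definition is_snake (n : nat) (p : seq int) : bool :=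
  [&& is_signed_perm n p,
      (0 < nth 0 p 0)%R &
      all (fun i => if odd i then (nth 0 p i < nth 0 p i.+1)%R
                    else (nth 0 p i.+1 < nth 0 p i)%R) (iota 0 n.-1)].

Section Phi.
Variables (sigma pi : seq nat).
Let n := size sigma.

Definition tau (k : nat) : nat := nth 0 pi (index k sigma).
Definition tau_inv (k : nat) : nat := nth 0 sigma (index k pi).

Definition cycle_peak (k : nat) : bool :=
  [&& 2 <= k <= n, tau_inv k < k & tau k < k].

Definition hatted (k : nat) : bool :=
  cycle_peak k &&
  has (fun l => (nth 0 sigma l.-1 == k) && (nth 0 pi l == k)) (iota 1 n.-1).

Definition cyc (k : nat) : seq nat :=
  traject tau k (find (fun j => iter j.+1 tau k == k) (iota 0 n)).+1.

Definition foata : seq nat :=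
  flatten [seq cyc k | k <- iota 1 n & all (fun x => x <= k) (cyc k)].

Definition tt (i : nat) : nat := nth 0 foata i.-1.

(* left peak / right valley at position i (1-based), with t_0 = 0, t_(n+1) = +oo *)
Definition left_peak (i : nat) : bool :=
  [&& 1 <= i <= n, (i == 1) || (tt i.-1 < tt i) & (i < n) && (tt i.+1 < tt i)].
Definition right_valley (i : nat) : bool :=
  [&& 1 <= i <= n, (1 < i) && (tt i < tt i.-1) & (i == n) || (tt i < tt i.+1)].

Definition assoc_peak_hatted (i : nat) : bool :=
  let J := [seq j <- iota 1 i.-1 | left_peak j] in
  (J != [::]) && hatted (tt (last 0 J)).

Definition Phi_sign (i : nat) : bool :=
  (~~ odd i && ~~ right_valley i) || (right_valley i && assoc_peak_hatted i).

Definition Phi_word : seq int :=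
  [seq (if Phi_sign i then - (tt i)%:Z else (tt i)%:Z)%R | i <- iota 1 n].
End Phi.

Definition Phi (w : seq nat * seq nat) : seq int := Phi_word w.1 w.2.

(* Main.v *)
Require Import Defs.
From mathcomp Require Import all_boot all_algebra zify.
Set Implicit Arguments. Unset Strict Implicit. Unset Printing Implicit Defensive.
Import GRing.Theory Num.Theory.

Definition T (t : seq nat) (i : nat) : nat := nth 0 t i.-1.
Definition LP n t i := [&& 1 <= i <= n, (i == 1) || (T t i.-1 < T t i) & (i < n) && (T t i.+1 < T t i)].
Definition RV n t i := [&& 1 <= i <= n, (1 < i) && (T t i < T t i.-1) & (i == n) || (T t i < T t i.+1)].
Definition Jl n t i := [seq j <- iota 1 i.-1 | LP n t j].
Definition APH n t (h : nat -> bool) i := (Jl n t i != [::]) && h (T t (last 0 (Jl n t i))).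
Definition SG n t h i := (~~ odd i && ~~ RV n t i) || (RV n t i && APH n t h i).
Definition Wd n t h : seq int :=
  [seq (if SG n t h i then - (T t i)%:Z else (T t i)%:Z)%R | i <- iota 1 n].

Lemma PhiE s p : Phi (s, p) = Wd (size s) (foata s p) (hatted s p).
Proof. by []. Qed.

Lemma nth_absz (p : seq int) i : nth 0 (map absz p) i = absz (nth 0%R p i).
Proof.
case: (ltnP i (size p)) => h; first by rewrite (nth_map 0%R).
by rewrite !nth_default ?size_map.
Qed.

Lemma sp_pos n p i : is_signed_perm n p -> i < n -> 0 < absz (nth 0%R p i).
Proof.
case/andP=> /eqP sz pe lt; rewrite -nth_absz.
have : nth 0 (map absz p) i \in iota 1 n.
  by rewrite -(perm_mem pe) mem_nth // size_map sz.
by rewrite mem_iota; case/andP.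
Qed.

Lemma snake_step n p j : is_snake n p -> j.+1 < n ->
  if odd j then (nth 0%R p j < nth 0%R p j.+1)%R else (nth 0%R p j.+1 < nth 0%R p j)%R.
Proof.
case/and3P=> _ _ /allP H lt; apply: H; rewrite mem_iota /=; lia.
Qed.

Lemma snake_of_signs n p : 0 < n -> is_signed_perm n p ->
  (forall i, i < n -> ~~ RV n (map absz p) i.+1 -> (nth 0%R p i < 0)%R = odd i) ->
  is_snake n p.
Proof.
move=> n0 sp H; apply/and3P; split => //.
  have := H 0 n0; rewrite /RV ltnn andbF /= => /(_ isT) h.
  have := sp_pos sp n0; move: h; rewrite /=; lia.
apply/allP=> i; rewrite mem_iota add0n => /andP[_ lti].
have lt1 : i.+1 < n by lia.
have pa := sp_pos sp (ltnW lt1); have pb := sp_pos sp lt1.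
have R1 : RV n (map absz p) i.+1 -> absz (nth 0%R p i) < absz (nth 0%R p i.+1).
  rewrite /RV /T /= !nth_absz => /and3P[_ _]; case: eqP => //=; lia.
have R2 : RV n (map absz p) i.+2 -> absz (nth 0%R p i.+1) < absz (nth 0%R p i).
  rewrite /RV /T /= !nth_absz; case/and3P=> _ h _; exact h.
have H1 := H i (ltnW lt1); have H2 := H i.+1 lt1.
move: R1 R2 H1 H2 pa pb; rewrite /=.
case: (odd i); case: (RV n _ i.+1); case: (RV n _ i.+2) => /=; lia.
Qed.

Lemma signs_of_snake n p : is_snake n p ->
  forall i, i < n -> ~~ RV n (map absz p) i.+1 -> (nth 0%R p i < 0)%R = odd i.
Proof.
move=> sn i lti; have sp : is_signed_perm n p by case/and3P: sn.
have p0 : (0 < nth 0%R p 0)%R by case/and3P: sn.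
have pa := sp_pos sp lti.
apply: contraNeq => ne; rewrite /RV /T /= !nth_absz.
apply/and3P; split; first by lia.
- case: i lti pa ne => [|i] lti pa ne; first by move: ne p0; rewrite /= ?eqbF_neg ?negbK ?eqb_id; lia.
  have := snake_step sn lti; move: ne pa; rewrite /=; case: (odd i) => /=; rewrite ?eqbF_neg ?negbK ?eqb_id; lia.
- case: (eqVneq i.+1 n) => //= ni; have lt1 : i.+1 < n by lia.
  have := snake_step sn lt1; move: ne pa; rewrite /=; case: (odd i) => /=;  rewrite ?eqbF_neg ?negbK ?eqb_id; lia.
Qed.

Lemma filter_iota_last (P : pred nat) m j :
  (filter P (iota 1 m) != [::] /\ last 0 (filter P (iota 1 m)) = j) <->
  (1 <= j <= m /\ P j /\ forall l, j < l <= m -> ~~ P l).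
Proof.
elim: m => [|m IH]; first by split=> [[]|[]] //; lia.
have -> : iota 1 m.+1 = iota 1 m ++ [:: m.+1] by have := iotaD 1 m 1; rewrite addn1 add1n.
rewrite filter_cat /=.
case Pm: (P m.+1) => /=.
  rewrite last_cat /=; split.
    case=> _ <-; split; first lia; split=> // l; lia.
  case=> h1 [h2 h3]; split; first by case: (filter _ _).
  case: (ltngtP j m.+1) => // jm; last lia.
  by have := h3 m.+1; rewrite Pm ltnSn jm => /(_ isT).
rewrite cats0 IH; split.
  case=> h1 [h2 h3]; split; first lia; split=> // l /andP[jl].
  rewrite leq_eqVlt => /orP[/eqP -> | lm]; first by rewrite Pm.
  by apply: h3; rewrite jl.
case=> h1 [h2 h3]; split.
  case: (ltngtP j m.+1) => jm; first lia; first lia.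
  by move: h2; rewrite jm Pm.
split=> // l /andP[jl lm]; apply: h3; rewrite jl; lia.
Qed.

Lemma Jl_lastP n t i j :
  (Jl n t i != [::] /\ last 0 (Jl n t i) = j) <->
  (1 <= j < i /\ LP n t j /\ forall l, j < l < i -> ~~ LP n t l).
Proof.
rewrite /Jl filter_iota_last; split=> [[h1 [h2 h3]]|[h1 [h2 h3]]].
  split; first lia; split=> // l jl; apply: h3; lia.
split; first lia; split=> // l jl; apply: h3; lia.
Qed.

Section Word.
Variables (n : nat) (t : seq nat).
Hypotheses (Hu : uniq t) (Hs : size t = n).

Lemma Tneq a b : 1 <= a <= n -> 1 <= b <= n -> a != b -> T t a != T t b.
Proof.
move=> ha hb ab; rewrite /T nth_uniq ?Hs //; lia.
Qed.

Lemma Tlt_total a b : 1 <= a <= n -> 1 <= b <= n -> a != b ->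
  (T t a < T t b) || (T t b < T t a).
Proof. move=> ha hb ab; have := Tneq ha hb ab; lia. Qed.

Lemma peak_before k : 1 <= k -> k < n -> T t k.+1 < T t k ->
  exists j, [/\ 1 <= j <= k, LP n t j & forall l, j < l <= k -> T t l < T t l.-1].
Proof.
elim: k => [//|k IH] _ kn dk.
case: (posnP k) => [k0|kpos].
  subst k; exists 1; split=> //; first by rewrite /LP /=; apply/andP; split; lia.
  move=> l; lia.
have /orP[up|down] := @Tlt_total k k.+1 (ltac:(lia)) (ltac:(lia)) (ltac:(lia)).
  exists k.+1; split=> //; first lia.
    rewrite /LP /=; apply/and3P; split; first lia; first by rewrite up orbT.
    by rewrite kn.
  move=> l; lia.
have [j [h1 h2 h3]] := IH kpos (ltnW kn) down.
exists j; split=> //; first lia.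
move=> l /andP[jl]; rewrite leq_eqVlt => /orP[/eqP -> //|lk].
by apply: h3; rewrite jl.
Qed.

Lemma valley_after j m : j < m -> m <= n -> 1 <= j ->
  (forall l, j < l <= m -> T t l < T t l.-1) ->
  exists i, [/\ j < i <= n, RV n t i & forall l, j < l <= i -> T t l < T t l.-1].
Proof.
move=> jm mn j1; move Ed: (n - m) => d; elim: d m jm mn Ed => [|d IH] m jm mn Ed H.
  have mE : m = n by lia.
  exists m; split=> //; first lia.
  rewrite /RV; apply/and3P; split; first lia; last by rewrite mE eqxx.
  by rewrite (H m) ?andbT; lia.
have /orP[up|down] := @Tlt_total m m.+1 (ltac:(lia)) (ltac:(lia)) (ltac:(lia)).
  exists m; split=> //; first lia.
  rewrite /RV; apply/and3P; split; first lia; last by rewrite up orbT.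
  by rewrite (H m) ?andbT; lia.
apply: (IH m.+1) => //; first lia; first lia; first lia.
move=> l /andP[jl]; rewrite leq_eqVlt => /orP[/eqP -> //|lm].
by apply: H; rewrite jl.
Qed.

Lemma noLP_desc l : 1 < l -> T t l < T t l.-1 -> ~~ LP n t l.
Proof. rewrite /LP => l1 d; apply/negP => /and3P[_ /orP[]]; lia. Qed.

Lemma RV_has_peak i : RV n t i -> Jl n t i != [::].
Proof.
case/and3P=> /andP[i1 iN] /andP[i2 d] _.
have [j [h1 h2 h3]] := peak_before (k := i.-1) (ltac:(lia)) (ltac:(lia)) (ltac:(by rewrite prednK; lia)).
apply/eqP => E; have : j \in Jl n t i by rewrite mem_filter h2 mem_iota; lia.
by rewrite E.
Qed.

Lemma LP_has_valley j : LP n t j ->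
  exists i, RV n t i /\ Jl n t i != [::] /\ last 0 (Jl n t i) = j.
Proof.
move=> lp; have := lp; case/and3P=> /andP[j1 jn] _ /andP[jlt d].
have [i [h1 h2 h3]] := valley_after (m := j.+1) (ltnSn j) jlt j1
   (ltac:(move=> l hl; (have -> : l = j.+1 by lia); exact d)).
exists i; split=> //; apply/Jl_lastP; split; first lia; split=> // l hl.
apply: noLP_desc; first lia; apply: h3; lia.
Qed.

Lemma valley_unique i1 i2 : RV n t i1 -> RV n t i2 ->
  Jl n t i1 != [::] -> Jl n t i2 != [::] ->
  last 0 (Jl n t i1) = last 0 (Jl n t i2) -> i1 = i2.
Proof.
wlog lt12 : i1 i2 / i1 <= i2.
  move=> W r1 r2 n1 n2 E; case: (leqP i1 i2) => h; first exact: W.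
  by apply/esym/W => //; lia.
move=> r1 r2 n1 n2 E; move: lt12; rewrite leq_eqVlt => /orP[/eqP //|lt12].
exfalso.
set j := last 0 (Jl n t i2) in E.
have [_ [_ H2]] : (1 <= j < i2 /\ LP n t j /\ forall l, j < l < i2 -> ~~ LP n t l)
  by apply/Jl_lastP.
have [hj1 _] : (1 <= j < i1 /\ LP n t j /\ forall l, j < l < i1 -> ~~ LP n t l)
  by apply/Jl_lastP; split => //; rewrite E.
move: r1 r2; rewrite /RV => /and3P[/andP[a1 a2] _ a3] /and3P[/andP[b1 b2] /andP[b3 b4] _].
have up : T t i1 < T t i1.+1 by move: a3; case: eqP => //=; lia.
have [j' [h1 h2 h3]] := peak_before (k := i2.-1) (ltac:(lia)) (ltac:(lia)) (ltac:(by rewrite prednK; lia)).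
case: (leqP j' i1) => hj'.
  case: (ltngtP i1.+1 i2) => e.
  - have : T t i1.+1 < T t i1.+1.-1 by apply: h3; lia.
    by rewrite /=; lia.
  - lia.
  - by move: up b4; rewrite -e /=; lia.
suff : ~~ LP n t j' by rewrite h2.
apply: H2; lia.
Qed.

End Word.

Lemma SGE n t h i : SG n t h i = if RV n t i then APH n t h i else ~~ odd i.
Proof. by rewrite /SG; case: (RV n t i); rewrite ?andbT ?andbF ?orbF. Qed.

Lemma Tmap (t : seq nat) n : size t = n -> [seq T t i | i <- iota 1 n] = t.
Proof.
move=> <-; have -> : iota 1 (size t) = map (addn 1) (iota 0 (size t)) by rewrite -iotaDl.
by rewrite -map_comp -[RHS](mkseq_nth 0) /mkseq; apply: eq_map => i /=.
Qed.

Lemma Wd_abs n t h : size t = n -> map absz (Wd n t h) = t.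
Proof.
move=> sz; rewrite /Wd -map_comp -[RHS](Tmap sz); apply: eq_map => i /=.
by case: (SG n t h i) => /=; lia.
Qed.

Lemma nth_Wd n t h i : i < n ->
  nth 0%R (Wd n t h) i = (if SG n t h i.+1 then - (T t i.+1)%:Z else (T t i.+1)%:Z)%R.
Proof. by move=> lt; rewrite /Wd (nth_map 0) ?size_iota // nth_iota // add1n. Qed.

Lemma T_pos n t i : perm_eq t (iota 1 n) -> 1 <= i <= n -> 0 < T t i.
Proof.
move=> pe hi; have sz : size t = n by rewrite (perm_size pe) size_iota.
have : T t i \in iota 1 n by rewrite -(perm_mem pe) /T mem_nth // sz; lia.
rewrite mem_iota; lia.
Qed.

Lemma Wd_snake n t h : 0 < n -> perm_eq t (iota 1 n) -> is_snake n (Wd n t h).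
Proof.
move=> n0 pe; have sz : size t = n by rewrite (perm_size pe) size_iota.
apply: snake_of_signs => //.
  by rewrite /is_signed_perm Wd_abs // size_map size_iota eqxx.
move=> i lti; rewrite Wd_abs // => nrv.
have := T_pos (i := i.+1) pe (ltac:(lia)).
rewrite nth_Wd // SGE (negbTE nrv) /=; case: (odd i) => /=; lia.
Qed.

Lemma Wd_inj_h n t h h' j : perm_eq t (iota 1 n) -> Wd n t h = Wd n t h' ->
  LP n t j -> h (T t j) = h' (T t j).
Proof.
move=> pe E lp; have sz : size t = n by rewrite (perm_size pe) size_iota.
have uq : uniq t by rewrite (perm_uniq pe) iota_uniq.
have [i [rv [ne la]]] := LP_has_valley uq sz lp.
have hi : 1 <= i <= n by case/and3P: rv.
have := congr1 (fun w => nth 0%R w i.-1) E; rewrite /= !nth_Wd; last lia; last lia.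
rewrite prednK; last lia.
rewrite !SGE rv /APH ne la /=.
have := T_pos pe hi; case: (h _); case: (h' _) => //; lia.
Qed.

Definition hp n (p : seq int) (k : nat) : bool :=
  let t := map absz p in
  has (fun i => [&& RV n t i, Jl n t i != [::], T t (last 0 (Jl n t i)) == k &
                    (nth 0%R p i.-1 < 0)%R]) (iota 1 n).

Lemma Wd_surj n p h : 0 < n -> is_snake n p ->
  (forall j, LP n (map absz p) j -> h (T (map absz p) j) = hp n p (T (map absz p) j)) ->
  Wd n (map absz p) h = p.
Proof.
move=> n0 sn H; set t := map absz p.
have sp : is_signed_perm n p by case/and3P: sn.
have sz : size p = n by case/andP: sp => /eqP.
have pe : perm_eq t (iota 1 n) by case/andP: sp.
have szt : size t = n by rewrite size_map.
have uq : uniq t by rewrite (perm_uniq pe) iota_uniq.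
apply: (@eq_from_nth _ 0%R); first by rewrite size_map size_iota sz.
move=> i; rewrite size_map size_iota => lti.
rewrite nth_Wd // /T /= nth_absz.
suff -> : SG n t h i.+1 = (nth 0%R p i < 0)%R.
  by case: ifP => /= [h1|/negbT h1]; lia.
rewrite SGE; case: ifP => rv; last first.
  rewrite (signs_of_snake sn lti) /=; first by case: (odd i).
  by rewrite -/t rv.
have ne := RV_has_peak uq szt rv.
set j := last 0 (Jl n t i.+1).
have [hj [lpj _]] : (1 <= j < i.+1 /\ LP n t j /\ forall l, j < l < i.+1 -> ~~ LP n t l)
  by apply/Jl_lastP.
rewrite /APH ne /= H //; apply/hasP/idP.
  case=> i' /[!mem_iota] hi' /and4P[rv' ne' /eqP e' neg].
  rewrite -/t in rv' ne' e'.
  have ej : last 0 (Jl n t i') = j.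
    have [hj' [lpj' _]] : (1 <= last 0 (Jl n t i') < i' /\ LP n t (last 0 (Jl n t i')) /\
       forall l, last 0 (Jl n t i') < l < i' -> ~~ LP n t l) by apply/Jl_lastP.
    apply/eqP; move: e'; apply: contra_eqT => nej.
    apply: (Tneq uq szt); [lia | lia | exact nej].
  have E : i' = i.+1 by apply: (valley_unique uq szt rv' rv ne' ne); rewrite ej.
  by move: neg; rewrite E.
move=> neg; exists i.+1; first by rewrite mem_iota; lia.
by rewrite rv ne eqxx /= neg.
Qed.

Definition In n x := 1 <= x <= n.
Definition ordf n (f : nat -> nat) k := (find (fun j => iter j.+1 f k == k) (iota 0 n)).+1.
Definition cycf n f k := traject f k (ordf n f k).
Definition maxk n f k := all (fun x => x <= k) (cycf n f k).
Definition Fo n f := flatten [seq cycf n f k | k <- iota 1 n & maxk n f k].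

Lemma foataE s p : foata s p = Fo (size s) (tau s p).
Proof. by []. Qed.

Section Cyc.
Variables (n : nat) (f finv : nat -> nat).
Hypotheses (Hf : forall x, In n x -> In n (f x)) (Hl : forall x, In n x -> finv (f x) = x).

Lemma iterIn j x : In n x -> In n (iter j f x).
Proof. by move=> hx; elim: j => //= j IH; apply: Hf. Qed.

Lemma iter_cancel a b x : In n x -> a <= b -> iter a f x = iter b f x -> iter (b - a) f x = x.
Proof.
move=> hx; elim: a b => [|a IH] b ab; first by rewrite subn0.
case: b ab => [//|b] ab /= E.
have E' : iter a f x = iter b f x by rewrite -(Hl (iterIn a hx)) E Hl // iterIn.
by rewrite subSS; apply: IH.
Qed.

Lemma period x : In n x -> has (fun j => iter j.+1 f x == x) (iota 0 n).
Proof.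
move=> hx.
have : ~~ uniq (traject f x n.+1).
  apply/negP => U; suff : n.+1 <= n by rewrite ltnn.
  have {1}<- := size_traject f x n.+1; have {2}<- := size_iota 1 n.
  apply: uniq_leq_size U _ => y /trajectP[i _ ->].
  by rewrite mem_iota; have := iterIn i hx; rewrite /In add1n ltnS.
rewrite looping_uniq negbK => /trajectP[i lin E].
apply/hasP; exists (n - i).-1; first by rewrite mem_iota; lia.
rewrite prednK; last lia.
by apply/eqP; apply: (iter_cancel hx (ltnW lin)); rewrite E.
Qed.

Lemma ordP x : In n x ->
  [/\ 0 < ordf n f x, ordf n f x <= n, iter (ordf n f x) f x = x &
      forall r, 0 < r < ordf n f x -> iter r f x != x].
Proof.
move=> hx; have hp := period hx; have := hp; rewrite has_find size_iota => lt.
split; rewrite /ordf //.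
- by apply/eqP; have := nth_find 0 hp; rewrite nth_iota.
- case=> [//|r] /andP[_ lr].
  have := before_find 0 lr; rewrite nth_iota; last by move: lr lt; rewrite ltnS; apply: ltn_trans.
  by move=> ->.
Qed.

Lemma cyc_uniq x : In n x -> uniq (cycf n f x).
Proof.
move=> hx; have [o0 _ _ mn] := ordP hx.
rewrite /cycf -(prednK o0) looping_uniq; apply/negP => /trajectP[i lti E].
have := mn ((ordf n f x).-1 - i); rewrite iter_cancel //; last lia.
by rewrite eqxx => /(_ (ltac:(lia))).
Qed.

Lemma iter_mul c x : In n x -> iter (c * ordf n f x) f x = x.
Proof.
move=> hx; have [_ _ io _] := ordP hx.
by elim: c => [|c IH]; [rewrite mul0n | rewrite mulSn iterD IH io].
Qed.

Lemma cyc_mem x y : In n x -> (y \in cycf n f x) <-> exists r, y = iter r f x.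
Proof.
move=> hx; have [o0 _ io _] := ordP hx; split.
  by case/trajectP=> i _ ->; exists i.
case=> r ->; apply/trajectP; exists (r %% ordf n f x); first by rewrite ltn_pmod.
by rewrite {1}(divn_eq r (ordf n f x)) addnC iterD iter_mul.
Qed.

Lemma cyc_In x y : In n x -> y \in cycf n f x -> In n y.
Proof. by move=> hx /(cyc_mem _ hx)[r ->]; apply: iterIn. Qed.

Lemma cyc_sym x y : In n x -> y \in cycf n f x -> x \in cycf n f y.
Proof.
move=> hx hy; have hy' := cyc_In hx hy.
case/(cyc_mem _ hx): hy => a E; apply/(cyc_mem _ hy'); have [o0 _ _ _] := ordP hx.
exists (a * ordf n f x - a); rewrite E -iterD subnK ?iter_mul //.
by rewrite leq_pmulr.
Qed.

Lemma cyc_trans x y z : In n x -> y \in cycf n f x -> z \in cycf n f y -> z \in cycf n f x.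
Proof.
move=> hx hy hz; have hy' := cyc_In hx hy.
case/(cyc_mem _ hx): hy => a Ea; case/(cyc_mem _ hy'): hz => b Eb.
by apply/(cyc_mem _ hx); exists (b + a); rewrite iterD -Ea.
Qed.

Lemma cyc_head x : In n x -> x \in cycf n f x.
Proof. by move=> hx; apply/(cyc_mem _ hx); exists 0. Qed.

End Cyc.

Definition fm (s : seq nat) := foldr maxn 0 s.
Definition Mt (t : seq nat) i := fm (take i t).
Definition FP (f : nat -> nat) t := forall i, 1 <= i <= size t ->
  f (T t i) = if (i < size t) && (T t i.+1 < Mt t i) then T t i.+1 else Mt t i.

Lemma fm_cat s1 s2 : fm (s1 ++ s2) = maxn (fm s1) (fm s2).
Proof. by elim: s1 => [|x s IH] /=; rewrite ?max0n // IH maxnA. Qed.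

Lemma fm_ub s x : x \in s -> x <= fm s.
Proof.
elim: s => [//|y s IH]; rewrite inE /= => /orP[/eqP ->|h]; first exact: leq_maxl.
by rewrite (leq_trans (IH h)) // leq_maxr.
Qed.

Lemma fm_le s c : all (fun x => x <= c) s -> fm s <= c.
Proof. by elim: s => [//|y s IH] /= /andP[h1 h2]; rewrite geq_max h1 IH. Qed.

Lemma fm_mem s : s != [::] -> fm s \in s.
Proof.
elim: s => [//|y s IH] _; rewrite /fm /= -/(fm s) inE.
case: (leqP y (fm s)) => h.
  case: s IH h => [|z s] IH h; first by move: h; rewrite /fm /= leqn0 => /eqP ->.
  by rewrite IH ?orbT.
by rewrite eqxx.
Qed.

Section Step.
Variable f : nat -> nat.

Lemma FP_step t1 b h o :
  FP f t1 -> all (fun x => x < h) t1 -> b = traject f h o -> 0 < o ->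
  iter o f h = h -> (forall r, 0 < r < o -> iter r f h != h) ->
  all (fun x => x <= h) b -> FP f (t1 ++ b).
Proof.
move=> P1 H1 Eb o0 io mn Hb i; rewrite size_cat => /andP[i1 ile].
have szb : size b = o by rewrite Eb size_traject.
have nthb r : r < o -> nth 0 b r = iter r f h.
  by move=> lr; rewrite Eb (set_nth_default h) ?size_traject // nth_traject.
have bh : forall x, x \in b -> x <= h by move=> x; move/allP: Hb; apply.
case: (leqP i (size t1)) => hi.
  have Ti : T (t1 ++ b) i = T t1 i by rewrite /T nth_cat ifT //; lia.
  have Mi : Mt (t1 ++ b) i = Mt t1 i.
    rewrite /Mt take_cat; case: ifP => // /negbT; rewrite -leqNgt => h2.
    by (have -> : i = size t1 by lia); rewrite subnn take0 cats0 take_size.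
  rewrite Ti Mi P1; last by rewrite i1.
  move: hi; rewrite leq_eqVlt => /orP[/eqP ei|lt].
    rewrite ei ltnn /=.
    have -> : size t1 < size t1 + size b by rewrite szb; lia.
    have -> : T (t1 ++ b) (size t1).+1 = h.
      by rewrite /T /= nth_cat ltnn subnn nthb // iter0.
    have ne : t1 != [::] by case: (t1) ei i1 => //= -> .
    have : fm t1 < h by move/allP: H1; apply; apply: fm_mem.
    by rewrite /Mt take_size /= => lt'; rewrite ltnNge (ltnW lt').
  have -> : i < size t1 + size b by lia.
  rewrite lt /=.
  by rewrite /T /= nth_cat lt.
set r := i - size t1 - 1.
have Ei : i = size t1 + r.+1 by rewrite /r; lia.
have ro : r < o by rewrite /r; lia.
have Ti : T (t1 ++ b) i = iter r f h.
  by rewrite /T Ei addnS /= nth_cat ltnNge leq_addr /= addKn nthb.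
have Mi : Mt (t1 ++ b) i = h.
  rewrite /Mt take_cat Ei ltnNge leq_addr /= addKn fm_cat.
  have e1 : fm (take r.+1 b) = h.
    apply/eqP; rewrite eqn_leq; apply/andP; split.
      by apply: fm_le; apply/allP=> x /mem_take; apply: bh.
    by apply: fm_ub; rewrite Eb -(prednK o0) /= inE eqxx.
  rewrite e1; apply/maxn_idPr; apply: fm_le; apply/sub_all: H1 => x; exact: ltnW.
rewrite Ti Mi -iterS Ei ltn_add2l szb.
case: (ltnP r.+1 o) => ro1 /=.
  have Ti1 : T (t1 ++ b) (size t1 + r.+1).+1 = iter r.+1 f h.
    by rewrite /T /= nth_cat ltnNge leq_addr /= addKn nthb.
  rewrite Ti1; suff -> : iter r.+1 f h < h by [].
  have : iter r.+1 f h <= h by apply: bh; rewrite -nthb // mem_nth // szb.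
  by rewrite leq_eqVlt (negbTE (mn _ _)) //; lia.
rewrite -iterS; by have -> : r.+1 = o by lia.
Qed.

End Step.

Lemma iotaS1 m : iota 1 m.+1 = iota 1 m ++ [:: m.+1].
Proof. by have := iotaD 1 m 1; rewrite addn1 add1n. Qed.

Section Fo.
Variables (n : nat) (f finv : nat -> nat).
Hypotheses (Hf : forall x, In n x -> In n (f x)) (Hl : forall x, In n x -> finv (f x) = x).

Definition tm m := flatten [seq cycf n f k | k <- iota 1 m & maxk n f k].

Lemma tm_succ m : tm m.+1 = tm m ++ (if maxk n f m.+1 then cycf n f m.+1 else [::]).
Proof.
rewrite /tm iotaS1 filter_cat map_cat flatten_cat /=.
by case: (maxk n f m.+1); rewrite /= ?cats0.
Qed.

Lemma tm_mem m x : reflect (exists k, [/\ 1 <= k <= m, maxk n f k & x \in cycf n f k])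
  (x \in tm m).
Proof.
apply: (iffP flatten_mapP).
  by case=> k; rewrite mem_filter mem_iota => /andP[mk hk] hx; exists k; split=> //; lia.
case=> k [hk mk hx]; exists k => //; rewrite mem_filter mem_iota mk; lia.
Qed.

Lemma tm_all m : all (fun x => x <= m) (tm m).
Proof.
apply/allP=> x /tm_mem[k [hk mk hx]].
by move/allP: mk => /(_ x hx); lia.
Qed.

Lemma tm_FP m : m <= n -> FP f (tm m).
Proof.
elim: m => [|m IH] mn; first by move=> i /=; lia.
rewrite tm_succ; case mk: (maxk n f m.+1); last by rewrite cats0; apply: IH; lia.
have hm : In n m.+1 by rewrite /In; lia.
have [o0 _ io mnm] := ordP Hf Hl hm.
apply: (FP_step (IH (ltnW mn))) => //.
by apply/allP=> x hx; move/allP: (tm_all m) => /(_ x hx); lia.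
Qed.

Lemma tm_uniq m : m <= n -> uniq (tm m).
Proof.
elim: m => [|m IH] mn //.
rewrite tm_succ; case mk: (maxk n f m.+1); last by rewrite cats0; apply: IH; lia.
have hm : In n m.+1 by rewrite /In; lia.
rewrite cat_uniq (cyc_uniq Hf Hl hm) andbT IH; last lia.
apply/hasPn=> x hx; apply/negP => /tm_mem[k [hk mk' hxk]].
have hkI : In n k by rewrite /In; lia.
have h1 : m.+1 \in cycf n f x by apply: (cyc_sym Hf Hl hm).
have h2 : m.+1 \in cycf n f k by apply: (cyc_trans Hf Hl hkI hxk).
by move/allP: mk' => /(_ _ h2); lia.
Qed.

Lemma Fo_tm : Fo n f = tm n.
Proof. by []. Qed.

Lemma Fo_perm : perm_eq (Fo n f) (iota 1 n).
Proof.
rewrite Fo_tm; apply: uniq_perm; [exact: tm_uniq | exact: iota_uniq | move=> x].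
apply/idP/idP.
  case/tm_mem=> k [hk _ hx]; have hkI : In n k by rewrite /In; lia.
  by have := cyc_In Hf Hl hkI hx; rewrite /In mem_iota; lia.
rewrite mem_iota => hx; have hxI : In n x by rewrite /In; lia.
set mx := fm (cycf n f x).
have mxin : mx \in cycf n f x by apply: fm_mem; apply/eqP => E; have := cyc_head Hf Hl hxI; rewrite E.
have mxI := cyc_In Hf Hl hxI mxin.
apply/tm_mem; exists mx; split.
- by move: mxI; rewrite /In.
- apply/allP=> y hy; apply: fm_ub; exact: (cyc_trans Hf Hl hxI mxin hy).
- exact: (cyc_sym Hf Hl hxI).
Qed.

Lemma Fo_FP : FP f (Fo n f).
Proof. exact: tm_FP. Qed.

End Fo.

Section PermWord.
Variables (n : nat) (t : seq nat).
Hypothesis Hp : perm_eq t (iota 1 n).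

Lemma pw_size : size t = n.
Proof. by rewrite (perm_size Hp) size_iota. Qed.

Lemma pw_uniq : uniq t.
Proof. by rewrite (perm_uniq Hp) iota_uniq. Qed.

Lemma pw_In i : 1 <= i <= n -> In n (T t i).
Proof.
move=> hi; have : T t i \in iota 1 n by rewrite -(perm_mem Hp) /T mem_nth // pw_size; lia.
by rewrite mem_iota /In; lia.
Qed.

Lemma pw_pos x : In n x -> exists2 i, 1 <= i <= n & T t i = x.
Proof.
move=> hx; have xin : x \in t by rewrite (perm_mem Hp) mem_iota; move: hx; rewrite /In; lia.
exists (index x t).+1; last by rewrite /T /= nth_index.
by rewrite -pw_size index_mem xin.
Qed.

Lemma pw_inj a b : 1 <= a <= n -> 1 <= b <= n -> T t a = T t b -> a = b.
Proof.
move=> ha hb E; apply/eqP; apply/negPn/negP => ne.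
by have := Tneq pw_uniq pw_size ha hb ne; rewrite E eqxx.
Qed.

Lemma T_le_Mt i : 1 <= i <= n -> T t i <= Mt t i.
Proof.
move=> hi; apply: fm_ub; rewrite /T.
have -> : take i t = take i.-1.+1 t by rewrite prednK //; lia.
by rewrite (take_nth 0) ?pw_size; [rewrite mem_rcons mem_head | lia].
Qed.

Variables (f finv : nat -> nat).
Hypotheses (HFP : FP f t) (Hfi : forall x, In n x -> In n (finv x))
  (Hl : forall x, In n x -> finv (f x) = x) (Hr : forall x, In n x -> f (finv x) = x).

Lemma FPn i : 1 <= i <= n ->
  f (T t i) = if (i < n) && (T t i.+1 < Mt t i) then T t i.+1 else Mt t i.
Proof. by move=> hi; rewrite HFP pw_size. Qed.

Lemma Rpeak i : 1 <= i <= n -> ((i < n) && (T t i.+1 < T t i)) = (f (T t i) < T t i).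
Proof.
move=> hi; have M := T_le_Mt hi; rewrite FPn //.
case: (i < n) => /=; last by rewrite ltnNge M.
by case: ifP => // /negbT; rewrite -leqNgt => h; rewrite ltnNge (leq_trans M h) ltnNge M.
Qed.

Lemma Lpeak i : 1 <= i <= n -> f (T t i) < T t i ->
  ((i == 1) || (T t i.-1 < T t i)) = (finv (T t i) < T t i).
Proof.
move=> hi fx; set x := T t i.
have xI : In n x by apply: pw_In.
case: (boolP ((1 < i) && (x < Mt t i.-1))) => [/andP[i1 xm] | C].
  have E : f (T t i.-1) = x.
    rewrite FPn; last lia; rewrite prednK; last lia.
    by rewrite ifT //; apply/andP; split; [lia | exact xm].
  have -> : finv x = T t i.-1 by rewrite -E Hl // pw_In //; lia.
  by have -> : (i == 1) = false by lia.
have -> : (i == 1) || (T t i.-1 < x).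
  case: (eqVneq i 1) => //= i1.
  have hm : Mt t i.-1 <= x by move: C; rewrite negb_and; case/orP; lia.
  have hT := T_le_Mt (i := i.-1) (ltac:(lia)).
  have := pw_inj (a := i.-1) (b := i) (ltac:(lia)) hi.
  by rewrite /x; lia.
have [i' hi' Ei'] := pw_pos (Hfi xI).
have := FPn hi'; rewrite Ei' Hr //; case: ifP => [/andP[lt' c']|_] e.
  have ei : i'.+1 = i by apply: pw_inj; [lia | exact hi | exact (esym e)].
  have i0 : 0 < i' by lia.
  by move: C; rewrite -ei /= e c' andbT ltnS i0.
have hT := T_le_Mt hi'; rewrite Ei' -e in hT.
rewrite leq_eqVlt in hT; case/orP: hT => [/eqP hT|//].
have fxx : f (finv x) = x by rewrite Hr.
by move: fx; rewrite -/x -{2}fxx hT ltnn.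
Qed.

Lemma LP_iff i : LP n t i = [&& 1 <= i <= n, finv (T t i) < T t i & f (T t i) < T t i].
Proof.
rewrite /LP; case: (boolP (1 <= i <= n)) => //= hi.
rewrite Rpeak //; case: (boolP (f (T t i) < T t i)) => fx; rewrite ?andbF ?andbT //.
exact: Lpeak.
Qed.

End PermWord.

Lemma Fo_inj n f g :
  (forall x, In n x -> In n (f x)) -> (forall x, In n x -> In n (g x)) ->
  (exists finv, forall x, In n x -> finv (f x) = x) ->
  (exists ginv, forall x, In n x -> ginv (g x) = x) ->
  Fo n f = Fo n g -> forall x, In n x -> f x = g x.
Proof.
move=> Hf Hg [fi Hfl] [gi Hgl] E x hx.
have Hp := Fo_perm Hf Hfl.
have [i hi <-] := pw_pos Hp hx.
rewrite (FPn Hp (Fo_FP Hf Hfl) hi) E.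
by rewrite -(FPn (Fo_perm Hg Hgl) (Fo_FP Hg Hgl) hi).
Qed.

Section Ext.
Variables (n : nat) (f g : nat -> nat).
Hypotheses (Hf : forall x, In n x -> In n (f x)) (Efg : forall x, In n x -> f x = g x).

Lemma iter_ext j x : In n x -> iter j f x = iter j g x.
Proof.
move=> hx; elim: j => //= j IH; rewrite -IH Efg //.
by elim: j {IH} => //= j IH; apply: Hf.
Qed.

Lemma traject_ext m x : In n x -> traject f x m = traject g x m.
Proof.
elim: m x => //= m IH x hx; congr (_ :: _); rewrite -Efg //; exact: IH (Hf hx).
Qed.

Lemma cycf_ext k : In n k -> cycf n f k = cycf n g k.
Proof.
move=> hk; rewrite /cycf /ordf traject_ext //; congr (traject _ _ _.+1).
by apply: eq_find => j; rewrite iter_ext.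
Qed.

Lemma Fo_ext : Fo n f = Fo n g.
Proof.
rewrite /Fo.
have E : {in iota 1 n, cycf n f =1 cycf n g}.
  by move=> k; rewrite mem_iota => hk; apply: cycf_ext; rewrite /In; lia.
rewrite (@eq_in_filter _ _ (maxk n g)); last by move=> k hk; rewrite /maxk E.
congr flatten; apply/eq_in_map => k; rewrite mem_filter => /andP[_ hk]; exact: E.
Qed.
End Ext.

Definition sinv (s : seq nat) x := (index x s).+1.

Section SPerm.
Variables (n : nat) (s : seq nat).
Hypothesis Hp : perm_eq s (iota 1 n).

Lemma sp_f x : In n x -> In n (T s x).
Proof. by move=> hx; apply: (pw_In Hp). Qed.

Lemma sp_inv x : In n x -> In n (sinv s x).
Proof.
move=> hx; have xin : x \in s by rewrite (perm_mem Hp) mem_iota; move: hx; rewrite /In; lia.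
by have := index_mem x s; rewrite xin (pw_size Hp) /In /sinv => h; lia.
Qed.

Lemma sp_l x : In n x -> sinv s (T s x) = x.
Proof.
move=> hx; rewrite /sinv /T index_uniq ?(pw_uniq Hp) ?(pw_size Hp); move: hx; rewrite /In; lia.
Qed.

Lemma sp_r x : In n x -> T s (sinv s x) = x.
Proof.
move=> hx; have xin : x \in s by rewrite (perm_mem Hp) mem_iota; move: hx; rewrite /In; lia.
by rewrite /sinv /T /= nth_index.
Qed.
End SPerm.

Lemma Fo_surj n t : perm_eq t (iota 1 n) ->
  exists2 s, perm_eq s (iota 1 n) & Fo n (T s) = t.
Proof.
move=> Ht.
set L := permutations (iota 1 n).
have inj : {in L &, injective (fun s => Fo n (T s))}.
  move=> s1 s2; rewrite !mem_permutations => p1 p2 E.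
  have E' := Fo_inj (sp_f p1) (sp_f p2) (ex_intro _ _ (sp_l p1)) (ex_intro _ _ (sp_l p2)) E.
  apply: (@eq_from_nth _ 0); first by rewrite (pw_size p1) (pw_size p2).
  move=> i; rewrite (pw_size p1) => lt.
  by have := E' i.+1; rewrite /T /= => -> //; rewrite /In; lia.
have U : uniq (map (fun s => Fo n (T s)) L) by rewrite map_inj_in_uniq // permutations_uniq.
have S : {subset map (fun s => Fo n (T s)) L <= L}.
  move=> u /mapP[s]; rewrite !mem_permutations => ps ->.
  exact: (Fo_perm (sp_f ps) (sp_l ps)).
have [_ M] := uniq_min_size U S (ltac:(by rewrite size_map)).
have : t \in map (fun s => Fo n (T s)) L by rewrite M mem_permutations.
by case/mapP=> s; rewrite mem_permutations => ps ->; exists s.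
Qed.

Definition mmx (f : nat -> nat) x := maxn x (f x).
Definition tie f (H : pred nat) x : nat := if x == mmx f x then ~~ H x else H (mmx f x).
Definition key n f H x := ((mmx f x).*2 + tie f H x) * n.+1 + minn x n.

Section Key.
Variables (n : nat) (f : nat -> nat) (H : pred nat).

Lemma tie_le1 x : tie f H x <= 1.
Proof. by rewrite /tie; case: ifP => _; [case: (H x) | case: (H _)]. Qed.

Lemma key_mm x y : mmx f x < mmx f y -> key n f H x < key n f H y.
Proof.
rewrite /key => lt; have := tie_le1 x; have : minn x n < n.+1 by lia.
move: (tie f H x) (tie f H y) (minn x n) (minn y n) (mmx f x) (mmx f y) lt.
move=> a b c d e g *; nia.
Qed.

Lemma key_le_mm x y : key n f H x < key n f H y -> mmx f x <= mmx f y.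
Proof. move=> h; rewrite leqNgt; apply/negP => /key_mm; lia. Qed.

Lemma key_tie x y : mmx f x = mmx f y -> tie f H x < tie f H y -> key n f H x < key n f H y.
Proof.
rewrite /key => e lt; rewrite e; have : minn x n < n.+1 by lia.
move: (tie f H x) (tie f H y) (minn x n) (minn y n) (mmx f y) lt.
move=> a b c d g *; nia.
Qed.

Lemma key_inj x y : In n x -> In n y -> key n f H x = key n f H y -> x = y.
Proof.
rewrite /In => hx hy e.
have := congr1 (fun k => k %% n.+1) e; rewrite /key !modnMDl !modn_small; lia.
Qed.
End Key.

Section WIP.
Variables (n : nat) (s p : seq nat).
Hypothesis Hw : is_WIP n (s, p).

Lemma w_s : perm_eq s (iota 1 n). Proof. by case/and3P: Hw. Qed.
Lemma w_p : perm_eq p (iota 1 n). Proof. by case/and3P: Hw. Qed.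
Lemma w_sort : sorted leq [seq maxn x.1 x.2 | x <- zip s p]. Proof. by case/and3P: Hw. Qed.
Lemma w_szs : size s = n. Proof. exact: pw_size w_s. Qed.
Lemma w_szp : size p = n. Proof. exact: pw_size w_p. Qed.
Lemma w_us : uniq s. Proof. exact: pw_uniq w_s. Qed.
Lemma w_up : uniq p. Proof. exact: pw_uniq w_p. Qed.

Lemma w_ins x : In n x -> x \in s.
Proof. by rewrite (perm_mem w_s) mem_iota /In; lia. Qed.
Lemma w_inp x : In n x -> x \in p.
Proof. by rewrite (perm_mem w_p) mem_iota /In; lia. Qed.
Lemma w_nths i : i < n -> In n (nth 0 s i).
Proof.
move=> lt; have : nth 0 s i \in iota 1 n by rewrite -(perm_mem w_s) mem_nth ?w_szs.
by rewrite mem_iota /In; lia.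
Qed.
Lemma w_nthp i : i < n -> In n (nth 0 p i).
Proof.
move=> lt; have : nth 0 p i \in iota 1 n by rewrite -(perm_mem w_p) mem_nth ?w_szp.
by rewrite mem_iota /In; lia.
Qed.

Lemma tau_nth i : i < n -> tau s p (nth 0 s i) = nth 0 p i.
Proof. by move=> lt; rewrite /tau index_uniq ?w_szs ?w_us. Qed.
Lemma tau_inv_nth i : i < n -> tau_inv s p (nth 0 p i) = nth 0 s i.
Proof. by move=> lt; rewrite /tau_inv index_uniq ?w_szp ?w_up. Qed.

Lemma w_index x : In n x -> index x s < n.
Proof. by move=> hx; rewrite -w_szs index_mem w_ins. Qed.
Lemma w_indexp x : In n x -> index x p < n.
Proof. by move=> hx; rewrite -w_szp index_mem w_inp. Qed.

Lemma tau_In x : In n x -> In n (tau s p x).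
Proof. by move=> hx; apply: w_nthp; apply: w_index. Qed.
Lemma tau_inv_In x : In n x -> In n (tau_inv s p x).
Proof. by move=> hx; apply: w_nths; apply: w_indexp. Qed.

Lemma tau_l x : In n x -> tau_inv s p (tau s p x) = x.
Proof.
move=> hx; rewrite -{1}(nth_index 0 (w_ins hx)) tau_nth ?w_index //.
by rewrite tau_inv_nth ?w_index // nth_index // w_ins.
Qed.
Lemma tau_r x : In n x -> tau s p (tau_inv s p x) = x.
Proof.
move=> hx; rewrite -{1}(nth_index 0 (w_inp hx)) tau_inv_nth ?w_indexp //.
by rewrite tau_nth ?w_indexp // nth_index // w_inp.
Qed.

Lemma p_map : p = map (tau s p) s.
Proof.
apply: (@eq_from_nth _ 0); first by rewrite size_map w_szs w_szp.
move=> i; rewrite w_szp => lt; by rewrite (nth_map 0) ?w_szs // tau_nth.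
Qed.

Lemma mm_adj i : i.+1 < n -> mmx (tau s p) (nth 0 s i) <= mmx (tau s p) (nth 0 s i.+1).
Proof.
move=> lt; have := w_sort; move/(sortedP 0) => /(_ i).
rewrite size_map size_zip w_szs w_szp minnn => /(_ lt); rewrite !(nth_map (0,0)) ?size_zip ?w_szs ?w_szp ?minnn //; last lia.
by rewrite !nth_zip ?w_szs ?w_szp //= /mmx !tau_nth //; lia.
Qed.

Lemma WIP_sorted : sorted (fun x y => key n (tau s p) (hatted s p) x < key n (tau s p) (hatted s p) y) s.
Proof.
apply/(sortedP 0) => i; rewrite w_szs => lt.
set x := nth 0 s i; set y := nth 0 s i.+1.
have hx : In n x by apply: w_nths; lia.
have hy : In n y by apply: w_nths; lia.
have := mm_adj lt; rewrite leq_eqVlt => /orP[/eqP e|]; last exact: key_mm.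
apply: key_tie => //.
have xy : x != y by rewrite /x /y nth_uniq ?w_szs ?w_us //; lia.
have tx : tau s p x = nth 0 p i by rewrite tau_nth //; lia.
have ty : tau s p y = nth 0 p i.+1 by rewrite tau_nth //; lia.
have pxy : nth 0 p i != nth 0 p i.+1 by rewrite nth_uniq ?w_szp ?w_up //; lia.
set k := mmx (tau s p) x.
have ek : mmx (tau s p) y = k by [].
rewrite /tie -/k ek.
have Hk1 : x = k \/ tau s p x = k by rewrite /k /mmx; lia.
have Hk2 : y = k \/ tau s p y = k by move: ek; rewrite /mmx; lia.
case: Hk1 => [xk | txk]; case: Hk2 => [yk | tyk].
- by move: xy; rewrite xk yk eqxx.
-
  have yk : y != k by rewrite -xk eq_sym.
  rewrite xk eqxx (negbTE yk).
  suff -> : hatted s p k by [].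
  have hk : In n k by rewrite -xk.
  have hy' : y < k by move: ek; rewrite /mmx tyk; move: yk; lia.
  apply/andP; split.
    rewrite /cycle_peak w_szs; apply/and3P; split.
    + by move: hk hy' hy; rewrite /In; lia.
    + by rewrite -{1}tyk tau_l.
    + have t1 : tau s p x <= x by move: xk; rewrite /k /mmx; lia.
      have t2 : tau s p x != k by rewrite tx -tyk ty.
      rewrite -xk in t2 *; lia.
  apply/hasP; exists i.+1; first by rewrite mem_iota w_szs; lia.
  by rewrite /= -/x xk eqxx -ty tyk eqxx.
- have xk : x != k by apply/eqP => E; move: xy; rewrite E yk eqxx.
  rewrite (negbTE xk) yk eqxx.
  suff -> : hatted s p k = false by [].
  apply/negbTE; rewrite negb_and; apply/orP; right.
  apply/hasPn => l; rewrite mem_iota w_szs => hl; apply/negP => /andP[/eqP a /eqP b].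
  have l1 : l.-1 = i.+1.
    apply/eqP; rewrite -(nth_uniq 0 _ _ w_us) ?w_szs; [|lia|lia].
    by rewrite a -/y yk.
  have : nth 0 p l = nth 0 p i by rewrite b -tx.
  move/eqP; rewrite nth_uniq ?w_szp ?w_up; lia.
- by move: pxy; rewrite -tx -ty txk tyk eqxx.
Qed.

End WIP.

Lemma mmx_In n f x : In n x -> In n (f x) -> In n (mmx f x).
Proof. rewrite /In /mmx; lia. Qed.

Lemma key_ext n f g H H' x : In n x -> In n (f x) -> f x = g x ->
  (H x = H' x) -> (H (mmx f x) = H' (mmx f x)) -> key n f H x = key n g H' x.
Proof.
move=> hx hfx e h1 h2; rewrite /key /tie /mmx -e.
by rewrite /mmx in h2; rewrite h1 h2.
Qed.

Lemma WIP_inj n s p s' p' : is_WIP n (s, p) -> is_WIP n (s', p') ->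
  (forall x, In n x -> tau s p x = tau s' p' x) ->
  (forall k, In n k -> hatted s p k = hatted s' p' k) -> s = s' /\ p = p'.
Proof.
move=> W1 W2 Et Eh.
set k1 := key n (tau s p) (hatted s p).
have ek : {in In n &, (fun x y => k1 x < k1 y) =2
                     (fun x y => key n (tau s' p') (hatted s' p') x < key n (tau s' p') (hatted s' p') y)}.
  move=> a b ha hb /=.
  have E z : In n z -> k1 z = key n (tau s' p') (hatted s' p') z.
    move=> hz; have tz := tau_In W1 hz.
    apply: key_ext => //; [exact: Et | exact: Eh | apply: Eh; exact: mmx_In].
  by rewrite !E.
have all2 : all (In n) s' by apply/allP => x; rewrite (perm_mem (w_s W2)) mem_iota /In; lia.
have S1 := WIP_sorted W1.
have S2 : sorted (fun x y => k1 x < k1 y) s'.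
  by rewrite (eq_in_sorted ek all2); exact: WIP_sorted W2.
have es : s = s'.
  apply: (irr_sorted_eq (leT := fun x y => k1 x < k1 y)) => //.
  - by move=> x y z /= h1 h2; apply: ltn_trans h1 h2.
  - by move=> x /=; rewrite ltnn.
  - by move=> x; rewrite (perm_mem (w_s W1)) (perm_mem (w_s W2)).
split=> //; rewrite (p_map W1) (p_map W2).
have -> : map (tau s' p') s' = map (tau s' p') s by rewrite es.
apply/eq_in_map => x.
by rewrite (perm_mem (w_s W1)) mem_iota => hx; apply: Et; rewrite /In; lia.
Qed.

Lemma zip_map_max (g : nat -> nat) s :
  [seq maxn x.1 x.2 | x <- zip s (map g s)] = map (mmx g) s.
Proof. by elim: s => //= x s ->. Qed.

Section Cons.
Variables (n : nat) (w : seq nat) (H : pred nat).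
Hypothesis Hp : perm_eq w (iota 1 n).

Definition kf := key n (T w) H.
Definition csig := sort (fun x y => kf x <= kf y) (iota 1 n).
Definition cpi := map (T w) csig.

Lemma cs_perm : perm_eq csig (iota 1 n).
Proof. by rewrite /csig perm_sort. Qed.

Lemma cs_In x : x \in csig -> In n x.
Proof. by rewrite (perm_mem cs_perm) mem_iota /In; lia. Qed.

Lemma cs_size : size csig = n.
Proof. exact: pw_size cs_perm. Qed.

Lemma cs_uniq : uniq csig.
Proof. exact: pw_uniq cs_perm. Qed.

Lemma cs_sorted : sorted (fun x y => kf x < kf y) csig.
Proof.
have S : sorted (fun x y => kf x <= kf y) csig.
  by apply: sort_sorted => x y; apply: leq_total.
have U : uniq (map kf csig).
  rewrite map_inj_in_uniq ?cs_uniq // => x y hx hy; apply: key_inj; exact: cs_In.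
have : sorted ltn (map kf csig) by rewrite ltn_sorted_uniq_leq U sorted_map.
by rewrite sorted_map.
Qed.

Lemma cp_perm : perm_eq cpi (iota 1 n).
Proof.
apply: uniq_perm; [| exact: iota_uniq |].
  rewrite map_inj_in_uniq ?cs_uniq // => x y hx hy e.
  by rewrite -(sp_l Hp (cs_In hx)) e (sp_l Hp) // cs_In.
move=> x; apply/mapP/idP.
  case=> y hy ->; have := sp_f Hp (cs_In hy); rewrite mem_iota /In; lia.
rewrite mem_iota => hx; have hxI : In n x by rewrite /In; lia.
exists (sinv w x); last by rewrite (sp_r Hp).
by rewrite (perm_mem cs_perm) mem_iota; have := sp_inv Hp hxI; rewrite /In; lia.
Qed.

Lemma cs_WIP : is_WIP n (csig, cpi).
Proof.
apply/and3P; split; [exact: cs_perm | exact: cp_perm |].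
rewrite /= /cpi zip_map_max sorted_map.
apply: sub_sorted cs_sorted => x y /=; exact: key_le_mm.
Qed.

Lemma cs_tau x : In n x -> tau csig cpi x = T w x.
Proof.
move=> hx; have xin : x \in csig by rewrite (perm_mem cs_perm) mem_iota; move: hx; rewrite /In; lia.
by rewrite /tau /cpi (nth_map 0) ?index_mem // nth_index.
Qed.

Lemma cs_has k : In n k -> sinv w k < k -> T w k < k ->
  has (fun l => (nth 0 csig l.-1 == k) && (nth 0 cpi l == k)) (iota 1 (size csig).-1) = H k.
Proof.
move=> hk yk fk; set y := sinv w k.
have hy : In n y := sp_inv Hp hk.
have fy : T w y = k := sp_r Hp hk.
have Win := cs_WIP.
have kin : k \in csig := w_ins Win hk.
have yin : y \in csig := w_ins Win hy.
set j := index k csig; set j' := index y csig.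
have jn : j < n by rewrite -cs_size index_mem.
have jn' : j' < n by rewrite -cs_size index_mem.
have nj : nth 0 csig j = k by rewrite nth_index.
have nj' : nth 0 csig j' = y by rewrite nth_index.
have posinj a b : a < n -> b < n -> nth 0 csig a = nth 0 csig b -> a = b.
  move=> ha hb e; apply/eqP; rewrite -(nth_uniq 0 _ _ cs_uniq) ?cs_size //; exact/eqP.
have mk : mmx (T w) k = k by rewrite /mmx; lia.
have my : mmx (T w) y = k by rewrite /mmx fy; lia.
have tk : tie (T w) H k = ~~ H k by rewrite /tie mk eqxx.
have ty : tie (T w) H y = H k by rewrite /tie my ifN //; lia.
have ordk a b : a < n -> b < n -> a < b -> kf (nth 0 csig a) < kf (nth 0 csig b).
  move=> ha hb ab; apply: (sorted_ltn_nth (leT := fun x y => kf x < kf y)) => //.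
  - by move=> u v z; apply: ltn_trans.
  - exact: cs_sorted.
  - by rewrite inE cs_size.
  - by rewrite inE cs_size.
have ordk' a b : a < n -> b < n -> kf (nth 0 csig a) < kf (nth 0 csig b) -> a < b.
  move=> ha hb h; case: (ltngtP a b) => // e.
    by have := ordk _ _ hb ha e; lia.
  by move: h; rewrite e ltnn.
have hasE : has (fun l => (nth 0 csig l.-1 == k) && (nth 0 cpi l == k)) (iota 1 (size csig).-1)
            = (j' == j.+1).
  rewrite cs_size; apply/hasP/eqP.
    case=> l; rewrite mem_iota => hl /andP[/eqP a /eqP b].
    have l1 : l.-1 = j by apply: posinj; [lia | done | by rewrite a nj].
    have hlI : In n (nth 0 csig l) by apply: cs_In; rewrite mem_nth // cs_size; lia.
    have : nth 0 csig l = y.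
      by rewrite /y -b /cpi (nth_map 0) ?cs_size ?(sp_l Hp hlI) //; lia.
    rewrite -nj' => /posinj; lia.
  move=> e; exists j.+1; first by rewrite mem_iota; lia.
  by rewrite /= nj eqxx /cpi (nth_map 0) ?cs_size -?e ?nj' ?fy ?eqxx //.
rewrite hasE; case Hk: (H k).
  have lt : kf k < kf y by apply: key_tie; [rewrite mk my | rewrite tk ty Hk].
  have jj : j < j' by apply: ordk' => //; rewrite nj nj'.
  apply/eqP; case: (ltngtP j' j.+1) => // e; first lia.
  have z1 : j.+1 < n by lia.
  set z := nth 0 csig j.+1.
  have hzI : In n z by apply: cs_In; rewrite mem_nth // cs_size.
  have k1 : kf k < kf z by rewrite -nj; apply: ordk.
  have k2 : kf z < kf y by rewrite -nj'; apply: ordk.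
  have m1 := key_le_mm k1; have m2 := key_le_mm k2.
  have mz : mmx (T w) z = k by lia.
  have : z = k \/ T w z = k by move: mz; rewrite /mmx; lia.
  case=> [zk | tzk].
    by have := posinj j.+1 j z1 jn; rewrite -/z zk nj => /(_ erefl); lia.
  have zy : z = y by rewrite /y -tzk (sp_l Hp hzI).
  by have := posinj j.+1 j' z1 jn'; rewrite -/z zy nj' => /(_ erefl); lia.
have lt : kf y < kf k by apply: key_tie; [rewrite mk my | rewrite tk ty Hk].
have jj : j' < j by apply: ordk' => //; rewrite nj nj'.
by apply/eqP; lia.
Qed.

Lemma cs_hatted k : hatted csig cpi k = [&& 2 <= k <= n, sinv w k < k, T w k < k & H k].
Proof.
rewrite /hatted /cycle_peak cs_size.
case: (boolP (2 <= k <= n)) => //= hk2.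
have hk : In n k by rewrite /In; lia.
have Win := cs_WIP.
have ti : tau_inv csig cpi k = sinv w k.
  by rewrite -{1}(sp_r Hp hk) -(cs_tau (sp_inv Hp hk)) (tau_l Win) // sp_inv.
rewrite ti cs_tau //.
case: (boolP (sinv w k < k)) => //= h1; case: (boolP (T w k < k)) => //= h2.
by rewrite -cs_size cs_has.
Qed.

End Cons.

Lemma PhiE' n s p : is_WIP n (s, p) -> Phi (s, p) = Wd n (Fo n (tau s p)) (hatted s p).
Proof. by move=> W; rewrite PhiE foataE (w_szs W). Qed.

Lemma WIP_Fo_perm n s p : is_WIP n (s, p) -> perm_eq (Fo n (tau s p)) (iota 1 n).
Proof. by move=> W; apply: Fo_perm; [exact: tau_In W | exact: tau_l W]. Qed.

Lemma WIP_LP n s p j : is_WIP n (s, p) ->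
  LP n (Fo n (tau s p)) j =
  [&& 1 <= j <= n, tau_inv s p (T (Fo n (tau s p)) j) < T (Fo n (tau s p)) j &
      tau s p (T (Fo n (tau s p)) j) < T (Fo n (tau s p)) j].
Proof.
move=> W; apply: (LP_iff (WIP_Fo_perm W)).
- by apply: Fo_FP; [exact: tau_In W | exact: tau_l W].
- exact: tau_inv_In W.
- exact: tau_l W.
- exact: tau_r W.
Qed.

Theorem theorem2p1 (n : nat) : 1 <= n ->
  (forall w : seq nat * seq nat, is_WIP n w -> is_snake n (Phi w)) /\
  {in [pred w | is_WIP n w] &, injective Phi} /\
  (forall q : seq int, is_snake n q -> exists2 w, is_WIP n w & Phi w = q).
Proof.
move=> n1; split; [|split].
- case=> s p W; rewrite (PhiE' W); apply: Wd_snake => //; exact: WIP_Fo_perm W.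
- case=> s p [s' p']; rewrite !inE => W1 W2.
  rewrite (PhiE' W1) (PhiE' W2) => E.
  have Et : Fo n (tau s p) = Fo n (tau s' p').
    by rewrite -(Wd_abs (hatted s p) (pw_size (WIP_Fo_perm W1))) E Wd_abs // (pw_size (WIP_Fo_perm W2)).
  have Etau := Fo_inj (tau_In W1) (tau_In W2) (ex_intro _ _ (tau_l W1)) (ex_intro _ _ (tau_l W2)) Et.
  have Einv : forall x, In n x -> tau_inv s p x = tau_inv s' p' x.
    move=> x hx; have hy := tau_inv_In W1 hx.
    by rewrite -{2}(tau_r W1 hx) Etau // (tau_l W2).
  have Ecp : forall k, cycle_peak s p k = cycle_peak s' p' k.
    move=> k; rewrite /cycle_peak (w_szs W1) (w_szs W2).
    case: (boolP (2 <= k <= n)) => //= hk.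
    by rewrite Einv ?Etau // /In; lia.
  have [es ep] : s = s' /\ p = p'.
    apply: (WIP_inj W1 W2 Etau) => k hk.
    case cp: (cycle_peak s p k); last first.
      by rewrite /hatted cp -Ecp cp.
    set t := Fo n (tau s p).
    have Hp := WIP_Fo_perm W1.
    have [j hj ej] := pw_pos Hp hk.
    have lp : LP n t j.
      by rewrite (WIP_LP j W1) -/t ej hj /=; move: cp; rewrite /cycle_peak; case/and3P=> _ -> ->.
    have E' : Wd n t (hatted s p) = Wd n t (hatted s' p') by rewrite E -Et.
    by have := Wd_inj_h Hp E' lp; rewrite ej.
  by rewrite es ep.
- move=> q sn.
  have sp : is_signed_perm n q by case/and3P: sn.
  set t := map absz q.
  have pt : perm_eq t (iota 1 n) by case/andP: sp.
  have [w pw Ew] := Fo_surj pt.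
  set H := hp n q.
  have W := cs_WIP H pw.
  exists (csig n w H, cpi n w H) => //.
  rewrite (PhiE' W).
  have -> : Fo n (tau (csig n w H) (cpi n w H)) = t.
    by rewrite -Ew; apply: Fo_ext; [exact: tau_In W | exact: cs_tau].
  apply: Wd_surj => // j lp; rewrite -/t in lp *.
  have hj : 1 <= j <= n by case/andP: lp => ->.
  have hk := pw_In pt hj.
  have LPe := LP_iff (Fo_perm (sp_f pw) (sp_l pw)) (Fo_FP (sp_f pw) (sp_l pw))
    (sp_inv pw) (sp_l pw) (sp_r pw) j.
  move: lp; rewrite -Ew LPe Ew (cs_hatted H pw) => /and3P[_ a b]; rewrite a b /=.
  have := sp_inv pw hk; move: hk a; rewrite /In => h1 h2 h3.
  by have -> : (1 < T t j <= n) = true by lia.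
Qed.
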